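(* For all integers $n,d\ge0$, $T(n,\omega^d)\le P(n,\omega^d)$.
   Context: $[c]=\{1,\dots,c\}$; ordinals are identified with sets of smaller ordinals; $\approx$ is order-equivalence; $\binom{S}{n}$ is the set of $n$-element subsets. $T(n,S)$ is the least $t\in\mathbb{N}$ such that for every $c\ge1$ and every $\mathrm{COL}:\binom{S}{n}\to[c]$ there is $S'\subseteq S$, $S'\approx S$, with $|\mathrm{COL}(\binom{S'}{n})|\le t$ ($\infty$ if none). Every $\beta<\omega^d\cdot k$ is uniquely $\omega^d b+\sum_{j<d}\omega^j a_j$ with $0\le b<k$, $a_j\in\mathbb{N}$. A coloring rule (CR) on $\binom{\omega^d\cdot k}{n}$ is a pair $(\mathcal{Y},\preceq)$ with $\mathcal{Y}:\{1,\dots,n\}\to\{0,\dots,k-1\}$ and $\preceq$ a total preorder on $I=\{(i,j):1\le i\le n,0\le j<d\}$ (with induced equivalence $\equiv$ and strict part $\prec$) such that: (1) if $d\ge1$, $(i,0)\prec(i',0)$ for $i<i'$; if $d=0$, $\mathcal{Y}(i)<\mathcal{Y}(i')$ for $i<i'$; (2) $(i,j)\equiv(i',j)$ for some $j$ implies $\mathcal{Y}(i)=\mathcal{Y}(i')$; (3) $(i,j)\prec(i,j')$ for $j>j'$; (4) $(i,j)\equiv(i',j')$ implies $j=j'$; (5) for $j>0$, $(i,j)\not\equiv(i',j)$ implies $(i,j-1)\not\equiv(i',j-1)$. $P(n,\omega^d\cdot k)$ is the total number of CRs on $\binom{\omega^d\cdot k}{n}$, and $P(n,\omega^d)=P(n,\omega^d\cdot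 1)$. *)

(* Defs.v *)
From HB Require Import structures.
From mathcomp Require Import all_boot all_order finmap.
Set Implicit Arguments. Unset Strict Implicit. Unset Printing Implicit Defensive.
Local Open Scope fset_scope.

(* The ordinal omega^d: every beta < omega^d is uniquely
   sum_{j<d} omega^j a_j with a_j in nat; we represent beta by the
   d-tuple (a_0, ..., a_{d-1}) (a_j = tnth x j).  The ordinal order is
   the lexicographic order comparing the highest index first. *)
Definition olt (d : nat) (x y : d.-tuple nat) : Prop :=
  exists j : 'I_d, tnth x j < tnth y j /\
    (forall j' : 'I_d, (j < j')%N -> tnth x j' = tnth y j').

(* [T_works n d t] : for every c >= 1 and every coloring
   COL : binom(omega^d, n) -> [c] there is S' subset of omega^d with
   S' order-equivalent to omega^d (S' = range f, f an order embedding
   omega^d -> omega^d, i.e. an order isomorphism onto S') such that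
   COL takes at most t colors on binom(S', n).
   T(n, omega^d) <= t  iff  T_works n d t  (T is the least such t, and the
   set of such t is upward closed). *)
Definition T_works (n d t : nat) : Prop :=
  forall c : nat, 1 <= c ->
  forall COL : {fset (d.-tuple nat)} -> nat,
    (forall A : {fset (d.-tuple nat)}, #|` A| = n -> 1 <= COL A <= c) ->
    exists f : d.-tuple nat -> d.-tuple nat,
      (forall x y, olt x y -> olt (f x) (f y)) /\
      exists s : seq nat, size s <= t /\
        forall A : {fset (d.-tuple nat)}, #|` A| = n ->
          (forall x, x \in A -> exists y, f y = x) -> COL A \in s.

(* Index set I = {(i,j) : 1<=i<=n, 0<=j<d}; i is shifted to 0..n-1. *)
Definition Iset (n d : nat) := ('I_n * 'I_d)%type.

(* Coloring rules on binom(omega^d * k, n): Y : [n] -> {0..k-1},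
   and a total preorder given by its relation le on I. *)
Definition is_CR (n d k : nat) (Y : {ffun 'I_n -> 'I_k})
    (le : {ffun Iset n d * Iset n d -> bool}) : bool :=
  let le' := fun x y => le (x, y) in
  let eqv := fun x y => le' x y && le' y x in
  let lt := fun x y => le' x y && ~~ le' y x in
  [&&
      [forall x, forall y, le' x y || le' y x],
      [forall x, forall y, forall z, le' x y ==> le' y z ==> le' x z],
      [forall i : 'I_n, forall i' : 'I_n, forall j : 'I_d,
         ((i < i')%N && (j == 0 :> nat)) ==> lt (i, j) (i', j)],
      (d == 0) ==> [forall i : 'I_n, forall i' : 'I_n,
         (i < i')%N ==> (Y i < Y i')%N],
      [forall i : 'I_n, forall i' : 'I_n, forall j : 'I_d,
         eqv (i, j) (i', j) ==> (Y i == Y i')],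
      [forall i : 'I_n, forall j : 'I_d, forall j' : 'I_d,
         (j' < j)%N ==> lt (i, j) (i, j')],
      [forall x : Iset n d, forall y : Iset n d, eqv x y ==> (x.2 == y.2)] &
      [forall i : 'I_n, forall i' : 'I_n, forall j : 'I_d, forall j' : 'I_d,
         (j'.+1 == j :> nat) ==> ~~ eqv (i, j) (i', j) ==>
           ~~ eqv (i, j') (i', j')]].

(* P(n, omega^d * k): the number of coloring rules. *)
Definition P (n d k : nat) : nat :=
  #|[set p : {ffun 'I_n -> 'I_k} * {ffun Iset n d * Iset n d -> bool}
       | is_CR p.1 p.2]|.

(* Main.v *)
Require Import Defs.
From HB Require Import structures.
From mathcomp Require Import all_boot all_order finmap.
From mathcomp Require Import zify.
From Stdlib Require Import ClassicalEpsilon.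
Set Implicit Arguments. Unset Strict Implicit. Unset Printing Implicit Defensive.

Definition incr (h : nat -> nat) := forall a b, a < b -> h a < h b.

Lemma incr_lt h : incr h -> forall a b, (h a < h b) = (a < b).
Proof.
move=> hh a b; case: (ltngtP a b) => [ab|ba|->]; first by rewrite hh.
  by apply/negbTE; rewrite -leqNgt ltnW // hh.
by rewrite ltnn.
Qed.

Lemma incr_step h : (forall k, h k < h k.+1) -> incr h.
Proof.
move=> hs a b; elim: b => // b IH; rewrite ltnS leq_eqVlt => /orP [/eqP->//|ab].
exact: ltn_trans (IH ab) (hs b).
Qed.

Lemma incr_comp f g : incr f -> incr g -> incr (f \o g).
Proof. by move=> hf hg a b ab; apply: hf; apply: hg. Qed.

Lemma sorted_incr h V : incr h -> sorted ltn V -> sorted ltn (map h V).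
Proof. move=> hh; apply: homo_sorted => x y; exact: hh. Qed.

Definition Rconcl m (K : seq nat -> nat) :=
  exists h, incr h /\ exists col, forall V, sorted ltn V -> size V = m -> K (map h V) = col.

Lemma pigeon (col : nat -> nat) c : (forall k, col k <= c) ->
  exists c0, forall N, exists k, (N <= k) && (col k == c0).
Proof.
move=> hc; apply: NNPP => hn.
have hn' : forall c0, exists N, forall k, N <= k -> col k != c0.
  move=> c0; apply: NNPP => h1; apply: hn; exists c0 => N; apply: NNPP => h2.
  apply: h1; exists N => k Nk; apply/negP => /eqP e; apply: h2; exists k.
  by rewrite Nk e eqxx.
have : forall c1, exists N, forall k, N <= k -> forall c0, c0 <= c1 -> col k != c0.
  elim=> [|c1 [N HN]].
    have [N HN] := hn' 0; exists N => k Nk c0; rewrite leqn0 => /eqP->; exact: HN.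
  have [N' HN'] := hn' c1.+1; exists (maxn N N') => k Nk c0.
  rewrite leq_eqVlt => /orP [/eqP->|]; first by apply: HN'; lia.
  rewrite ltnS; apply: HN; lia.
move=> /(_ c) [N HN]; by have := HN N (leqnn N) (col N) (hc N); rewrite eqxx.
Qed.

Lemma ramsey m : forall c (K : seq nat -> nat), (forall s, K s <= c) -> Rconcl m K.
Proof.
elim: m => [|m IH] c K Kc.
  exists id; split=> //; exists (K [::]) => V _ /size0nil -> //.
have IH' : forall K : seq nat -> nat, exists gc : (nat -> nat) * nat,
   (forall s, K s <= c) -> incr gc.1 /\
     forall V, sorted ltn V -> size V = m -> K (map gc.1 V) = gc.2.
  move=> K'; case: (classic (forall s, K' s <= c)) => hK'.
    have [g [hg [col hcol]]] := IH c K' hK'; by exists (g, col).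
  by exists (id, 0).
pose F K' := proj1_sig (constructive_indefinite_description _ (IH' K')).
have FP K' : (forall s, K' s <= c) -> incr (F K').1 /\
     forall V, sorted ltn V -> size V = m -> K' (map (F K').1 V) = (F K').2.
  by rewrite /F; case: constructive_indefinite_description.
pose Kh (h : nat -> nat) s := K (h 0 :: map (h \o succn) s).
have Khc h s : Kh h s <= c by apply: Kc.
pose step (h : nat -> nat) := (h \o succn) \o (F (Kh h)).1.
pose H k := iter k step id.
pose col k := (F (Kh (H k))).2.
pose p k := H k 0.
have Hincr k : incr (H k).
  elim: k => [|k IHk] //= a b ab; rewrite /step /=.
  apply: IHk; rewrite ltnS; have [hg _] := FP (Kh (H k)) (Khc _); exact: hg.
have colc k : col k <= c.
  have [_ hc] := FP (Kh (H k)) (Khc _).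
  rewrite /col -(hc (iota 0 m)) ?size_iota //; exact: iota_ltn_sorted.
have Hrange k l : k <= l -> forall t, exists t', H l t = H k t'.
  elim: l => [|l IHl]; first by rewrite leqn0 => /eqP-> t; exists t.
  rewrite leq_eqVlt => /orP [/eqP->|]; first by move=> t; exists t.
  rewrite ltnS => /IHl IHk t; have [t' et'] := IHk ((succn \o (F (Kh (H l))).1) t).
  by exists t'; rewrite -et'.
have pincr : incr p.
  apply: incr_step => k; rewrite /p /= /step /=; apply: Hincr; lia.
have pcol k V : sorted ltn V -> size V = m -> K (p k :: map (H k.+1) V) = col k.
  move=> sV zV; have [_ hc] := FP (Kh (H k)) (Khc _); rewrite /col -(hc V sV zV).
  by rewrite /Kh -map_comp.
have pW k W : sorted ltn W -> all (fun l => k < l) W ->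
    exists V, [/\ sorted ltn V, size V = size W & map p W = map (H k.+1) V].
  elim: W => [|l W IHW]; first by exists [::].
  rewrite /= path_sortedE; last exact: ltn_trans.
  move=> /andP [/allP lW sW] /andP [kl kW].
  have [V [sV zV eV]] := IHW sW kW.
  have [t et] := Hrange k.+1 l kl 0.
  exists (t :: V); split; [|by rewrite /= zV|by rewrite /= -eV /p et].
  rewrite /= path_sortedE; last exact: ltn_trans.
  rewrite sV andbT; apply/allP => v vV.
  have : H k.+1 v \in map p W by rewrite eV map_f.
  case/mapP=> l' l'W ev.
  change (t < v); rewrite -(incr_lt (Hincr k.+1)) -et ev; apply: pincr; exact: lW.
have [c0 hc0] := pigeon colc.
pose nxt N := xchoose (hc0 N).
have nxtP N : (N <= nxt N) && (col (nxt N) == c0) := xchooseP (hc0 N).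
pose q i := iter i (fun x => nxt x.+1) (nxt 0).
have qincr : incr q.
  apply: incr_step => k /=; by have /andP [] := nxtP (q k).+1.
have qcol i : col (q i) = c0.
  case: i => [|i] /=; first by have /andP [_ /eqP] := nxtP 0.
  by have /andP [_ /eqP] := nxtP (q i).+1.
exists (p \o q); split; first exact: incr_comp.
exists c0 => [[|v V]] //= sV [zV].
have := sV; rewrite path_sortedE; last exact: ltn_trans.
move=> /andP [/allP vV sV'].
have hall : all (fun l => q v < l) (map q V).
  apply/allP => l /mapP [u uV ->]; apply: qincr; exact: vV.
have [V' [sV'' zV' eV']] := pW (q v) (map q V) (sorted_incr qincr sV') hall.
rewrite -(qcol v) -(pcol (q v) V' sV''); last by rewrite zV' size_map.
by rewrite -eV' map_comp.
Qed.

Lemma incr_le h : incr h -> forall a b, (h a <= h b) = (a <= b).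
Proof. by move=> hh a b; rewrite leqNgt incr_lt // -leqNgt. Qed.

Lemma ramsey_fam (T : eqType) c (J : seq T) (M : T -> nat) (K : T -> seq nat -> nat) :
  (forall t s, K t s <= c) ->
  exists h, incr h /\ forall t, t \in J -> exists col, forall V, sorted ltn V ->
     size V = M t -> K t (map h V) = col.
Proof.
move=> Kc; elim: J => [|t J [h1 [h1i IH]]]; first by exists id; split.
have [h2 [h2i [col hcol]]] := @ramsey (M t) c (K t \o map h1) (fun s => Kc t _).
exists (h1 \o h2); split; first exact: incr_comp.
move=> t'; rewrite inE => /orP [/eqP->|t'J].
  by exists col => V sV zV; rewrite map_comp; apply: hcol.
have [col' hc] := IH t' t'J; exists col' => V sV zV; rewrite map_comp.
by apply: hc => //; [exact: sorted_incr | rewrite size_map].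
Qed.

Section Pat.
Variable I : finType.

Definition pat (phi : {ffun I -> nat}) : {ffun I * I -> bool} :=
  [ffun p => phi p.1 <= phi p.2].

Lemma pat_uniq_aux (phi psi : {ffun I -> nat}) :
  pat phi = pat psi ->
  (forall v, (exists x, phi x = v) -> (exists x, psi x = v)) ->
  forall v, (forall x, phi x < v -> phi x = psi x) /\ (forall x, psi x < v -> phi x = psi x) ->
  forall x, phi x = v -> phi x = psi x.
Proof.
move=> ep im v [IH1 IH2] x ex.
have ep' a b : (phi a <= phi b) = (psi a <= psi b).
  by move/ffunP: ep => /(_ (a, b)); rewrite !ffunE.
case: (ltngtP (phi x) (psi x)) => // h.
  have [y ey] := im (phi x) (ex_intro _ x erefl).
  have : phi y < phi x.
    by rewrite ltnNge ep' -ltnNge ey.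
  move=> lt; have := IH1 y; rewrite -ex => /(_ lt) e.
  by move: lt; rewrite e ey ltnn.
by have := IH2 x; rewrite -ex => /(_ h) ->.
Qed.

Lemma pat_uniq (phi psi : {ffun I -> nat}) :
  pat phi = pat psi ->
  (forall v, (exists x, phi x = v) <-> (exists x, psi x = v)) -> phi = psi.
Proof.
move=> ep im.
have Q : forall v, (forall x, phi x < v -> phi x = psi x) /\ (forall x, psi x < v -> phi x = psi x).
  elim=> [|v [IH1 IH2]]; first by split.
  have A := pat_uniq_aux ep (fun v => proj1 (im v)) (conj IH1 IH2).
  have B := pat_uniq_aux (esym ep) (fun v => proj2 (im v)) (conj (fun x h => esym (IH2 x h)) (fun x h => esym (IH1 x h))).
  split=> x; rewrite ltnS leq_eqVlt => /orP [/eqP e|lt].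
  - exact: A.
  - exact: IH1.
  - by apply: esym; apply: B.
  - exact: IH2.
apply/ffunP => x; have [A _] := Q (phi x).+1; exact: A.
Qed.

Lemma undup_size_pat (phi psi : I -> nat) (s : seq I) :
  (forall a b, (phi a == phi b) = (psi a == psi b)) ->
  size (undup (map phi s)) = size (undup (map psi s)).
Proof.
move=> e; elim: s => //= a s IH.
have -> : (phi a \in map phi s) = (psi a \in map psi s).
  apply/mapP/mapP => [] [b bs eb]; exists b => //; apply/eqP.
    by rewrite -e eb.
  by rewrite e eb.
by case: (psi a \in map psi s) => //=; rewrite IH.
Qed.

Definition V0 (phi : {ffun I -> nat}) := sort leq (undup (map phi (enum I))).

Lemma V0_sorted phi : sorted ltn (V0 phi).
Proof. by rewrite ltn_sorted_uniq_leq sort_uniq undup_uniq sort_sorted //; exact: leq_total. Qed.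

Lemma V0_mem phi v : v \in V0 phi <-> exists x, phi x = v.
Proof.
rewrite mem_sort mem_undup; split.
  by case/mapP => x _ ->; exists x.
by case=> x <-; apply: map_f; rewrite mem_enum.
Qed.

Lemma V0_size phi : size (V0 phi) < #|I|.+1.
Proof. by rewrite ltnS size_sort cardE (leq_trans (size_undup _)) // size_map. Qed.

Definition hphi (h : nat -> nat) (phi : {ffun I -> nat}) : {ffun I -> nat} :=
  [ffun x => h (phi x)].

Lemma pat_h h phi : incr h -> pat (hphi h phi) = pat phi.
Proof. by move=> hh; apply/ffunP => p; rewrite !ffunE incr_le. Qed.

Lemma ramsey_pat c (K : {ffun I -> nat} -> nat) : (forall phi, K phi <= c) ->
  exists h, incr h /\ forall phi psi, pat phi = pat psi ->
     K (hphi h phi) = K (hphi h psi).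
Proof.
move=> Kc.
pose inh := inhabits ([ffun => 0] : {ffun I -> nat}).
pose K' (t : ({ffun I * I -> bool} * 'I_#|I|.+1)%type) (V : seq nat) :=
  K (epsilon inh (fun psi => pat psi = t.1 /\ forall v, v \in V <-> exists x, psi x = v)).
have [h [hi hK]] := ramsey_fam (enum {: {ffun I * I -> bool} * 'I_#|I|.+1}) (fun t => val t.2) (fun t s => Kc _ : K' t s <= c).
exists h; split=> // phi psi ep.
have key : forall phi : {ffun I -> nat},
    K (hphi h phi) = K' (pat phi, Ordinal (V0_size phi)) (map h (V0 phi)).
  move=> f; rewrite /K'; congr K.
  have Hex : exists psi, pat psi = (pat f, Ordinal (V0_size f)).1 /\
         forall v, v \in map h (V0 f) <-> exists x, psi x = v.
    exists (hphi h f); split; first by rewrite pat_h.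
    move=> v; split.
      by case/mapP => u /V0_mem [x <-] ->; exists x; rewrite ffunE.
    by case=> x; rewrite ffunE => <-; apply: map_f; apply/V0_mem; exists x.
  have [e1 e2] := epsilon_spec inh _ Hex.
  apply: esym; apply: pat_uniq; first by rewrite e1 pat_h.
  move=> v; rewrite -e2; split.
    by case/mapP => u /V0_mem [x <-] ->; exists x; rewrite ffunE.
  by case=> x; rewrite ffunE => <-; apply: map_f; apply/V0_mem; exists x.
have zz : size (V0 phi) = size (V0 psi).
  rewrite /V0 !size_sort; apply: undup_size_pat => a b.
  have f1 := proj2 (ffunP _ _) ep (a, b); have f2 := proj2 (ffunP _ _) ep (b, a).
  rewrite !ffunE /= in f1 f2; by rewrite !eqn_leq f1 f2.
have eo : Ordinal (V0_size phi) = Ordinal (V0_size psi) by apply: val_inj.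
rewrite !key ep eo.
have [col hcol] := hK (pat psi, Ordinal (V0_size psi)) (mem_enum _ _).
by rewrite (hcol (V0 phi) (V0_sorted _)) ?zz // (hcol (V0 psi) (V0_sorted _)).
Qed.
End Pat.

Definition sq (a c : nat) := (a + c + 1) * (a + c + 1) + c.

Lemma sq_inj a c a' c' : sq a c = sq a' c' -> a = a' /\ c = c'.
Proof.
rewrite /sq => e.
have s : a + c = a' + c'.
  case: (ltngtP (a + c) (a' + c')) => // lt; exfalso; nia.
split; nia.
Qed.

Lemma sq_gt a c : c < sq a c. Proof. rewrite /sq; nia. Qed.
Lemma sq_mono a a' c : a < a' -> sq a c < sq a' c. Proof. rewrite /sq; nia. Qed.

Section F.
Variable d : nat.

Fixpoint F (x : seq nat) (k : nat) : nat :=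
  if k is k'.+1 then sq (nth 0 x (d - k)) (F x k') else 0.

Lemma F_step x k : F x k < F x k.+1.
Proof. exact: sq_gt. Qed.

Lemma F_lt x k k' : k < k' -> F x k < F x k'.
Proof.
elim: k' => // k' IH; rewrite ltnS leq_eqVlt => /orP [/eqP->|lt]; first exact: F_step.
exact: ltn_trans (IH lt) (F_step _ _).
Qed.

Lemma F_inj x y : forall k k', F x k = F y k' -> k = k' /\ forall i, i <= k -> F x i = F y i.
Proof.
elim=> [|k IH] [|k'] //=.
- by move=> _; split=> // i; rewrite leqn0 => /eqP->.
- by move=> e; have := sq_gt (nth 0 y (d - k'.+1)) (F y k'); rewrite -e.
- by move=> e; have := sq_gt (nth 0 x (d - k.+1)) (F x k); rewrite e.
move=> /sq_inj [ea eF]; have [ekk hi] := IH _ eF; subst k'; split=> // i.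
rewrite leq_eqVlt => /orP [/eqP->|]; last by rewrite ltnS; apply: hi.
have -> : F x k.+1 = sq (nth 0 x (d - k.+1)) (F x k) by [].
have -> : F y k.+1 = sq (nth 0 y (d - k.+1)) (F y k) by [].
by rewrite ea eF.
Qed.

Lemma F_eq x y k : (forall i, d - k <= i -> nth 0 x i = nth 0 y i) -> F x k = F y k.
Proof.
elim: k => //= k IH e; rewrite e // IH // => i lt; apply: e; lia.
Qed.
End F.

Local Open Scope fset_scope.

Section Main.
Variables n d : nat.

Definition fmap (h : nat -> nat) (x : d.-tuple nat) : d.-tuple nat :=
  [tuple h (F d x (d - j)) | j < d].

Lemma nth_hi (x y : d.-tuple nat) (j : 'I_d) :
  (forall j' : 'I_d, j < j' -> tnth x j' = tnth y j') ->
  forall i, j < i -> nth 0 x i = nth 0 y i.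
Proof.
move=> e i ji; case: (ltnP i d) => id.
  by have := e (Ordinal id) ji; rewrite !(tnth_nth 0).
by rewrite !nth_default // size_tuple.
Qed.

Lemma fmap_olt h x y : incr h -> olt x y -> olt (fmap h x) (fmap h y).
Proof.
move=> hi [j [lt hj]]; exists j; split.
  rewrite !tnth_mktuple; apply: hi.
  have -> : d - j = (d - j.+1).+1 by have := ltn_ord j; lia.
  rewrite /= (F_eq (x := x) (y := y)); last first.
    move=> i ii; apply: (nth_hi hj); have := ltn_ord j; lia.
  have -> : d - (d - j.+1).+1 = j by have := ltn_ord j; lia.
  by apply: sq_mono; rewrite -!(tnth_nth 0).
move=> j' jj'; rewrite !tnth_mktuple; congr h; apply: F_eq => i ii.
apply: (nth_hi hj); have := ltn_ord j'; lia.
Qed.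

Lemma fmap_eq h (x y : d.-tuple nat) : (forall l, l <= d -> F d x l = F d y l) -> fmap h x = fmap h y.
Proof.
move=> e; apply: eq_from_tnth => j; rewrite !tnth_mktuple e //; lia.
Qed.

Definition y0 : d.-tuple nat := nseq_tuple d 0.

Lemma CR_lemma (ys : seq (d.-tuple nat)) :
  size ys = n ->
  (0 < d -> forall i i' : 'I_n, i < i' -> F d (nth y0 ys i) d < F d (nth y0 ys i') d) ->
  (d = 0 -> n <= 1) ->
  is_CR ([ffun => ord0] : {ffun 'I_n -> 'I_1}) (pat ([ffun p : Iset n d => F d (nth y0 ys p.1) (d - p.2)] : {ffun Iset n d -> nat})).
Proof.
move=> zy key small.
set psi := ([ffun p => _] : {ffun Iset n d -> nat}).
have pe : forall x y, pat psi (x, y) = (psi x <= psi y) by move=> x y; rewrite ffunE.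
have ps : forall i j, psi (i, j) = F d (nth y0 ys i) (d - j) by move=> i j; rewrite ffunE.
rewrite /is_CR.
apply/andP; split.
  by apply/forallP => x; apply/forallP => y; rewrite !pe leq_total.
apply/andP; split.
  apply/forallP => x; apply/forallP => y; apply/forallP => z; rewrite !pe.
  by apply/implyP => a; apply/implyP; apply: leq_trans.
apply/andP; split.
  apply/forallP => i; apply/forallP => i'; apply/forallP => j.
  apply/implyP => /andP [ii /eqP j0]; rewrite !pe !ps j0 subn0 -ltnNge.
  have d0 : 0 < d by rewrite -j0 ltn_ord.
  by rewrite (ltnW (key d0 _ _ ii)) key.
apply/andP; split.
  apply/implyP => /eqP /small n1; apply/forallP => i; apply/forallP => i'.
  by apply/implyP => ii; have := ltn_ord i'; lia.
apply/andP; split.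
  apply/forallP => i; apply/forallP => i'; apply/forallP => j.
  by apply/implyP => _; rewrite !ffunE.
apply/andP; split.
  apply/forallP => i; apply/forallP => j; apply/forallP => j'.
  apply/implyP => jj; rewrite !pe !ps -ltnNge.
  suff h : F d (nth y0 ys i) (d - j) < F d (nth y0 ys i) (d - j') by rewrite ltnW.
  apply: F_lt; have := ltn_ord j; lia.
apply/andP; split.
  apply/forallP => [[i j]]; apply/forallP => [[i' j']] /=.
  apply/implyP; rewrite !pe !ps -eqn_leq => /eqP /F_inj [e _].
  apply/eqP; apply: val_inj => /=; have := ltn_ord j; have := ltn_ord j'; lia.
apply/forallP => i; apply/forallP => i'; apply/forallP => j; apply/forallP => j'.
apply/implyP => /eqP jj; apply/implyP; apply: contra.
rewrite !pe !ps -!eqn_leq => /eqP /F_inj [_ e]; apply/eqP; apply: e.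
lia.
Qed.

End Main.

Local Open Scope fset_scope.

Lemma enum_nth_map (T : Type) (x0 : T) n (s : seq T) : size s = n ->
  [seq nth x0 s (val i) | i <- enum 'I_n] = s.
Proof.
move=> zs; have -> : [seq nth x0 s (val i) | i <- enum 'I_n] = map (nth x0 s) (map val (enum 'I_n)).
  by rewrite -map_comp.
by rewrite val_enum_ord -zs -/(mkseq _ _) mkseq_nth.
Qed.

Theorem theorem8p3 (n d : nat) : T_works n d (P n d 1).
Proof.
move=> c c1 COL HCOL.
pose dec (phi : {ffun Iset n d -> nat}) : {fset d.-tuple nat} :=
  [fset x in [seq [tuple phi (i, j) | j < d] | i <- enum 'I_n]].
pose K phi := if COL (dec phi) <= c then COL (dec phi) else 0.
have Kc : forall phi, K phi <= c by move=> phi; rewrite /K; case: ifP.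
have [h [hi hK]] := ramsey_pat Kc.
exists (fmap h); split; first by move=> x y; apply: fmap_olt.
pose inh := inhabits ([ffun => 0] : {ffun Iset n d -> nat}).
pose cR le := K (hphi h (epsilon inh (fun psi => pat psi = le))).
pose CRs := [set p : {ffun 'I_n -> 'I_1} * {ffun Iset n d * Iset n d -> bool} | is_CR p.1 p.2].
exists [seq cR p.2 | p <- enum CRs]; split; first by rewrite size_map -cardE.
move=> A An Ar.
pose pre (x : d.-tuple nat) := epsilon (inhabits x) (fun y => fmap h y = x).
have preP : forall x, x \in A -> fmap h (pre x) = x.
  move=> x /Ar ex; exact: (epsilon_spec (inhabits x) (fun y => fmap h y = x) ex).
pose key (y : d.-tuple nat) := F d y d.
pose ys := sort (fun y y' => key y <= key y') (map pre A).
have ysz : size ys = n by rewrite size_sort size_map.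
have ysA : forall y, y \in ys -> exists2 x, x \in A & y = pre x.
  by move=> y; rewrite mem_sort => /mapP [x xA ->]; exists x.
have ysu : uniq ys.
  rewrite sort_uniq map_inj_in_uniq ?fset_uniq // => x x' xA x'A e.
  by rewrite -(preP x xA) -(preP x' x'A) e.
pose psi := ([ffun p : Iset n d => F d (nth (y0 d) ys p.1) (d - p.2)] : {ffun Iset n d -> nat}).
have decA : dec (hphi h psi) = A.
  apply/fsetP => x; rewrite /dec in_fset /=.
  have -> : [seq [tuple hphi h psi (i, j) | j < d] | i <- enum 'I_n] =
            map (fmap h) [seq nth (y0 d) ys (val i) | i <- enum 'I_n].
    rewrite -map_comp; apply: eq_map => i /=; apply: eq_from_tnth => j.
    by rewrite !tnth_mktuple !ffunE.
  rewrite enum_nth_map //; apply/mapP/idP.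
    by case=> y /ysA [x' x'A ->] ->; rewrite preP.
  move=> xA; exists (pre x); last by rewrite preP.
  by rewrite mem_sort map_f.
have CRpsi : is_CR ([ffun => ord0] : {ffun 'I_n -> 'I_1}) (pat psi).
  apply: CR_lemma => //.
    move=> d0 i i' ii.
    have ysi : i < size ys by rewrite ysz.
    have ysi' : i' < size ys by rewrite ysz.
    have le : key (nth (y0 d) ys i) <= key (nth (y0 d) ys i').
      apply: (sorted_ltn_nth (leT := fun y y' => key y <= key y')) => //.
      - by move=> a b e; apply: leq_trans.
      - by apply: sort_sorted => a b; apply: leq_total.
    rewrite ltn_neqAle le andbT; apply/negP => /eqP /F_inj [_ e].
    have ef := fmap_eq h e.
    have [x xA ex] := ysA _ (mem_nth (y0 d) ysi).
    have [x' x'A ex'] := ysA _ (mem_nth (y0 d) ysi').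
    have : nth (y0 d) ys i == nth (y0 d) ys i'.
      by rewrite ex ex' -(preP x xA) -(preP x' x'A) -ex -ex' ef.
    rewrite nth_uniq // => /eqP/val_inj eq; by move: ii; rewrite eq ltnn.
  move=> d0; rewrite -An; move: (A) => A'; subst d.
  have tq : forall x y : 0.-tuple nat, x = y.
    by move=> x y; rewrite (tuple0 x) (tuple0 y).
  have := fset_uniq A'; case: (enum_fset A') => [|a [|b s]] //=.
  by rewrite inE (tq a b) eqxx.
have colA : COL A = K (hphi h psi).
  by rewrite /K decA; have /andP [_ ->] := HCOL A An.
have ex : exists psi', pat psi' = pat psi by exists psi.
have e := epsilon_spec inh (fun psi' => pat psi' = pat psi) ex.
rewrite colA; apply/mapP; exists ([ffun => ord0], pat psi); first by rewrite mem_enum inE.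
rewrite /cR /=; apply: hK; by rewrite e.
Qed.
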